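(* For all positive integers $a$ and $n$ there exists a positive integer $n'$ such that the following holds. Let $G$ and $H$ be finite graphs and let $(A_x: x\in V(H))$ be an $H$-partition of $G$ with $|A_x|\le a$ for all $x\in V(H)$. If $G$ contains a path on $n'$ vertices, then for every $w\in V(H)$ the graph $H-w$ contains a path on $n$ vertices.
   Context: A partition of $G$ is a set of pairwise disjoint sets of vertices (parts) covering $V(G)$. The quotient $G/\mathcal{P}$ has vertex set $\mathcal{P}$, with distinct parts adjacent iff some vertex of one is adjacent in $G$ to some vertex of the other. An $H$-partition of $G$ is a partition $(A_x: x\in V(H))$ of $V(G)$ indexed by $V(H)$ such that $H$ is (identified with) its quotient, i.e. for distinct $x,y$, $xy\in E(H)$ iff some vertex of $A_x$ is adjacent in $G$ to some vertex of $A_y$. *)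

(* Defs.v *)
From mathcomp Require Import all_boot.
Set Implicit Arguments. Unset Strict Implicit. Unset Printing Implicit Defensive.

Definition simple_graph (T : finType) (e : rel T) : Prop :=
  symmetric e /\ irreflexive e.

Definition is_path_in (T : finType) (e : rel T) (P : pred T) (n : nat) (s : seq T) : Prop :=
  [/\ size s = n, uniq s, all P s & sorted e s].

Definition has_path (T : finType) (e : rel T) (n : nat) : Prop :=
  exists s : seq T, is_path_in e predT n s.

Definition has_path_minus (T : finType) (e : rel T) (w : T) (n : nat) : Prop :=
  exists s : seq T, is_path_in e (predC1 w) n s.

(* An H-partition of G, given by the part map f : V(G) -> V(H), i.e. A_x = f^-1(x):
   for distinct x, y, xy in E(H) iff some vertex of A_x is adjacent in G to some
   vertex of A_y. *)
Definition part (T U : finType) (f : T -> U) (x : U) : {set T} := [set u | f u == x].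

Definition is_H_partition (T U : finType) (eG : rel T) (eH : rel U) (f : T -> U) : Prop :=
  forall x y : U, x != y ->
    eH x y = [exists u, exists v, [&& u \in part f x, v \in part f y & eG u v]].

(* Main.v *)
Require Import Defs.
From mathcomp Require Import all_boot zify.
Set Implicit Arguments. Unset Strict Implicit. Unset Printing Implicit Defensive.

Lemma segment (T : Type) (p : pred T) (m k : nat) :
  forall (s : seq T) (x0 : T), count p s <= k -> k * m.+1 + m <= size s ->
  exists l u r, [/\ s = l ++ u ++ r, ~~ has p u, m <= size u & (p x0 -> p (last x0 l))].
Proof.
elim: k => [|k IH] s x0 hc hs.
- exists [::], s, [::]; split => //; first by rewrite cats0.
  by rewrite has_count -leqNgt.
- case: (boolP (has p s)) => hp; last first.
    exists [::], s, [::]; split => //; first by rewrite cats0.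
    by apply: leq_trans hs; rewrite leq_addl.
  move: hc hs; case: (split_find hp) => y s1 s2 py hs1 hc hs.
  case: (leqP m (size s1)) => hm.
    by exists [::], s1, (y :: s2); split => //; rewrite cat_rcons.
  have [l [u [r [e1 e2 e3 e4]]]] : exists l u r, [/\ s2 = l ++ u ++ r, ~~ has p u, m <= size u & (p y -> p (last y l))].
    apply: IH.
  - move: hc; rewrite count_cat -cats1 count_cat /= py.
    move: hs1; rewrite has_count -leqNgt leqn0 => /eqP ->.
    lia.
  - move: hs; rewrite size_cat size_rcons mulSn.
    nia.
  exists (rcons s1 y ++ l), u, r; split => //.
  - by rewrite e1 catA.
  - by rewrite last_cat last_rcons => _; exact: e4.
Qed.
Fixpoint g (a n : nat) : nat :=
  if n is n'.+1 then a * (g a n').+2 + (g a n').+1 else 0.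

Lemma walk_path (U : eqType) (eH : rel U) (a n : nat) :
  forall (x : U) (t : seq U), path (fun u v => (u == v) || eH u v) x t ->
  (forall y, count_mem y (x :: t) <= a) -> g a n <= size t ->
  exists q, [/\ size q = n, uniq (x :: q), path eH x q & {subset q <= t}].
Proof.
elim: n => [|n IH] x t hw hc hs.
  by exists [::].
have hcx : count (pred1 x) t <= a.
  by have := hc x; rewrite /= eqxx; lia.
have [l [u [r [e1 e2 e3 e4]]]] := segment (p := pred1 x) (m := (g a n).+1) x hcx hs.
case: u e1 e2 e3 => [|y t'] e1 e2 e3 //.
have hl : last x l = x by apply/eqP; apply: e4 => /=.
move: hw; rewrite e1 cat_path hl /= => /andP [_ /andP [hxy]].
rewrite cat_path => /andP [hw' _].
move: e2; rewrite /= negb_or => /andP [nyx nht].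
have {}hxy : eH x y by move: hxy; rewrite eq_sym (negbTE nyx).
have [q' [s1 s2 s3 s4]] : exists q, [/\ size q = n, uniq (y :: q), path eH y q & {subset q <= t'}].
  apply: IH => //.
- move=> z; apply: leq_trans (hc z).
  rewrite e1 /= !count_cat /= !count_cat; lia.
exists (y :: q'); split => //=; rewrite -/(uniq (y :: q')).
- by rewrite s1.
- rewrite s2 andbT inE negb_or eq_sym nyx /=.
  by apply/negP => /s4 hx; move/negP: nht; apply; apply/hasP; exists x => //=.
- by rewrite hxy s3.
- move=> z; rewrite inE => /orP [/eqP -> | /s4 hz]; rewrite !mem_cat inE ?mem_cat ?eqxx ?hz ?orbT //.
Qed.

Lemma count_part (T U : finType) (f : T -> U) (x : U) (s : seq T) :
  uniq s -> count (fun u => f u == x) s <= #|part f x|.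
Proof.
move=> hu; rewrite -size_filter.
have hf : uniq (filter (fun u => f u == x) s) by rewrite filter_uniq.
rewrite -(card_uniqP hf); apply: subset_leq_card; apply/subsetP => u.
by rewrite mem_filter => /andP [hx _]; rewrite /part inE.
Qed.

Theorem lemma9 :
  forall a n : nat, 0 < a -> 0 < n ->
  exists n' : nat, 0 < n' /\
    forall (T U : finType) (eG : rel T) (eH : rel U) (f : T -> U),
      simple_graph eG -> simple_graph eH ->
      is_H_partition eG eH f ->
      (forall x : U, #|part f x| <= a) ->
      has_path eG n' ->
      forall w : U, has_path_minus eH w n.
Proof.
move=> a [|n0] ha hn //.
set m := (g a n0).+1.
exists (a * m.+1 + m); split; first by rewrite /m; lia.
move=> T U eG eH f _ _ hP hA [s [hsz hu _ hsort]] w.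
case: s hsz hu hsort => [|x0 s'] hsz hu hsort; first by move: hsz; rewrite /m /=; lia.
have hc : count (fun u => f u == w) (x0 :: s') <= a.
  exact: leq_trans (count_part f w hu) (hA w).
have [l [u [r [e1 e2 e3 _]]]] := segment (p := fun u => f u == w) (m := m) x0 hc (eq_leq (esym hsz)).
case: u e1 e2 e3 => [|y t] e1 e2 e3 //.
have hs : sorted eG (y :: t).
  by move: hsort; rewrite e1 => /cat_sorted2 [_] /cat_sorted2 [].
have huu : uniq (y :: t).
  by move: hu; rewrite e1 cat_uniq => /and3P [_ _]; rewrite cat_uniq => /and3P [].
have hw : path (fun u v => (u == v) || eH u v) (f y) (map f t).
  rewrite path_map; apply: sub_path hs => u v huv; rewrite /relpre /=.
  have [e|ne] := eqVneq (f u) (f v); first by apply/orP; left; apply/eqP.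
  apply/orP; right; rewrite hP //.
  by apply/existsP; exists u; apply/existsP; exists v; rewrite /part !inE !eqxx huv.
have [q [s1 s2 s3 s4]] : exists q, [/\ size q = n0, uniq (f y :: q), path eH (f y) q & {subset q <= map f t}].
  apply: walk_path => //.
  - move=> z; rewrite -map_cons count_map.
    exact: leq_trans (count_part f z huu) (hA z).
  - by rewrite size_map; move: e3; rewrite /m /=.
exists (f y :: q); split => //=.
- by rewrite s1.
- apply/andP; split.
    by move: e2; rewrite /= negb_or => /andP [].
  apply/allP => z /s4 /mapP [v hv ->] /=.
  move: e2 => /hasPn /(_ v); rewrite inE hv orbT => /(_ isT) //.
Qed.
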